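(* Let $R$ be a finite ring with identity, $\alpha\in(0,1)$, and $Q$ a probability distribution on $R$ constant on similarity classes. Let $\pi$ be the (unique) stationary distribution of the Markov chain $(X_t)$ on $R$ defined below. If $a,b\in R$ satisfy $S_a=S_b$, then $\pi(a)=\pi(b)$.
   Context: Similarity classes: $a,b$ are similar if $b=uau^{-1}$ for some unit $u$ of $R$. The Markov chain $(X_t)$ on $R$: at each step an independent coin with Heads probability $\alpha$ is tossed; on Heads, $X_{t+1}=X_t+Y$ with $Y$ uniformly distributed on $R$ (independent); on Tails, $X_{t+1}=Z\cdot X_t$ with $Z$ drawn independently from $Q$ (so the transition matrix is $M_R=\frac{\alpha}{|R|}J+(1-\alpha)B_R$, where $J$ is the all-ones matrix and $B_R(a,b)=\sum_{x\in R,\,xa=b}Q(x)$). For $a\in R$, $I_a=Ra$ is the principal left ideal generated by $a$ and $S_a$ is the set of elements of $I_a$ that generate $I_a$ as a left ideal. *)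

(* Defs.v *)
From mathcomp Require Import all_boot all_order all_algebra.
Set Implicit Arguments. Unset Strict Implicit. Unset Printing Implicit Defensive.
Import Order.TTheory GRing.Theory Num.Theory.
Local Open Scope ring_scope.

Definition is_unit_of (T : finPzRingType) (u : T) : Prop :=
  exists v : T, u * v = 1 /\ v * u = 1.

Definition similar (T : finPzRingType) (a b : T) : Prop :=
  exists u v : T, u * v = 1 /\ v * u = 1 /\ b = u * a * v.

Definition is_distribution (T : finPzRingType) (F : realFieldType) (Q : T -> F) : Prop :=
  (forall x, 0 <= Q x) /\ \sum_(x : T) Q x = 1.

Definition class_constant (T : finPzRingType) (F : realFieldType) (Q : T -> F) : Prop :=
  forall a b : T, similar a b -> Q a = Q b.

Definition Bmat (T : finPzRingType) (F : realFieldType) (Q : T -> F) (a b : T) : F :=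
  \sum_(x : T | x * a == b) Q x.

Definition Mmat (T : finPzRingType) (F : realFieldType) (alpha : F) (Q : T -> F) (a b : T) : F :=
  alpha / (#|T|%:R) + (1 - alpha) * Bmat Q a b.

Definition stationary (T : finPzRingType) (F : realFieldType) (alpha : F) (Q pi : T -> F) : Prop :=
  is_distribution pi /\ forall b : T, \sum_(a : T) pi a * Mmat alpha Q a b = pi b.

Definition Ideal (T : finPzRingType) (a : T) : {set T} := [set x * a | x : T].

Definition Sgen (T : finPzRingType) (a : T) : {set T} :=
  [set c in Ideal a | Ideal c == Ideal a].

(* Main.v *)
Require Import Defs.
From mathcomp Require Import all_boot all_order all_algebra zify.
Import Order.TTheory GRing.Theory Num.Theory.
Local Open Scope ring_scope.


Section Alg.
Variable T : finPzRingType.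

Lemma rinv_linv (u v : T) : u * v = 1 -> v * u = 1.
Proof.
move=> uv.
have inj : injective (fun z : T => v * z).
  by move=> z z' /= /(congr1 (fun w => u * w)); rewrite !mulrA uv !mul1r.
have := f_invF inj 1; set z := invF inj 1 => /= vz.
have -> : u = z by rewrite -[u]mulr1 -vz mulrA uv mul1r.
by [].
Qed.

Definition rI (n : T) : {set T} := [set n * r | r : T].

Lemma mem_rI n : n \in rI n.
Proof. by apply/imsetP; exists 1; rewrite ?mulr1. Qed.

Lemma rI_sub n m : n \in rI m -> rI n \subset rI m.
Proof.
case/imsetP=> r _ ->; apply/subsetP=> z /imsetP [s _ ->].
by apply/imsetP; exists (r * s); rewrite ?mulrA.
Qed.

Definition kcnt (h : T) (N : {set T}) := #|[set n in N | n * h == 0]|.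
Definition ccnt (h : T) (Y : {set T}) := #|[set n | (n * h == 0) && (rI n == Y)]|.

Lemma kcnt_sum h m :
  kcnt h (rI m) = (\sum_(Y : {set T} | Y \subset rI m) ccnt h Y)%N.
Proof.
rewrite /kcnt -sum1_card.
rewrite (partition_big rI (fun Y => Y \subset rI m)); last first.
  by move=> i; rewrite inE => /andP [/rI_sub].
apply: eq_bigr => Y sub; rewrite /ccnt -sum1_card; apply: eq_bigl => n.
rewrite !inE; apply/idP/idP.
  by case/andP => /andP [_ ->] ->.
case/andP=> -> /eqP eY; rewrite eY eqxx andbT andbC /=.
by apply: (subsetP sub); rewrite -eY mem_rI.
Qed.

Lemma card_split (f : T) (ff : f * f = f) m :
  #|rI m| = (#|[set (n * f)%R | n in rI m]| * kcnt f (rI m))%N.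
Proof.
rewrite /kcnt -cardsX.
rewrite -(card_in_imset (f := fun n : T => ((n * f)%R, (n - n * f)%R))); last first.
  move=> n n' _ _ [e1 e2].
  by have := congr2 (fun p q : T => (p + q)%R) e2 e1; rewrite !subrK.
apply: eq_card => -[p q]; rewrite in_setX; apply/imsetP/andP.
  case=> n nI [-> ->]; split; first by apply/imsetP; exists n.
  rewrite inE; apply/andP; split; last by rewrite mulrBl -mulrA ff subrr.
  case/imsetP: nI => r _ ->; apply/imsetP; exists (r - r * f) => //.
  by rewrite mulrBr mulrA.
case=> /imsetP [n nI ->]; rewrite inE => /andP [qI /eqP qf].
exists (n * f + q).
  case/imsetP: nI => r _ ->; case/imsetP: qI => s _ ->.
  by apply/imsetP; exists (r * f + s) => //; rewrite mulrDr mulrA.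
have e : (n * f + q) * f = n * f by rewrite mulrDl qf addr0 -mulrA ff.
by rewrite e addrC addKr.
Qed.


Section Pair.
Variables (f al be : T).
Hypotheses (ff : f * f = f) (ba : be * al = f) (fb : f * be = be) (af : al * f = al).
Let g := al * be.
Lemma gg : g * g = g.
Proof. by rewrite /g mulrA -(mulrA al) ba af. Qed.
Lemma bg : be * g = be.
Proof. by rewrite /g mulrA ba fb. Qed.

Lemma kcnt_eq m : kcnt f (rI m) = kcnt g (rI m).
Proof.
have e1 := @card_split f ff m; have e2 := @card_split g gg m.
have eI : [set (n * g)%R | n in rI m] = (fun z => z * be) @: [set (n * f)%R | n in rI m].
  apply/setP => z; apply/imsetP/imsetP.
    case=> n nI ->; exists (n * al * f).
      apply/imsetP; exists (n * al) => //.
      case/imsetP: nI => r _ ->; apply/imsetP; exists (r * al) => //; by rewrite mulrA.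
    by rewrite -(mulrA n) af /g mulrA.
  case=> w /imsetP [n nI ->] ->; exists (n * be).
    case/imsetP: nI => r _ ->; apply/imsetP; exists (r * be) => //; by rewrite mulrA.
  by rewrite -mulrA fb -mulrA bg.
have cI : #|[set (n * g)%R | n in rI m]| = #|[set (n * f)%R | n in rI m]|.
  rewrite eI card_in_imset // => z z' /imsetP [n _ ->] /imsetP [n' _ ->] e.
  have := congr1 (fun w => w * al) e.
  by rewrite -!(mulrA _ be al) ba -!mulrA !ff.
have pos : (0 < #|[set (n * f)%R | n in rI m]|)%N.
  by apply/card_gt0P; exists (m * f); apply/imsetP; exists m; rewrite ?mem_rI.
by apply/eqP; rewrite -(eqn_pmul2l pos) -e1 -cI -e2.
Qed.

Lemma ccnt_eq Y : ccnt f Y = ccnt g Y.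
Proof.
have [n] := ubnP #|Y|; elim: n Y => // n IH Y; rewrite ltnS => leY.
case: (boolP [exists m, rI m == Y]) => [/existsP [m /eqP eY] | nE]; last first.
  suff H h : ccnt h Y = 0%N by rewrite !H.
  apply/eqP; rewrite cards_eq0; apply/eqP/setP => z; rewrite !inE.
  apply/negP => /andP [_ ez]; move/existsP: nE; apply; by exists z.
have := kcnt_eq m; rewrite !kcnt_sum.
rewrite (bigD1 Y) /=; last by rewrite eY.
rewrite [X in _ = X](bigD1 Y) /=; last by rewrite eY.
rewrite (eq_bigr (fun Z => ccnt g Z)) => [|Z /andP [sZ nZ]]; first by move/addIn.
apply: IH; apply: leq_trans leY; apply: proper_card.
by rewrite properEneq nZ -eY.
Qed.



Lemma unit_pair a : f * a = a ->
  exists u v : T, u * v = 1 /\ v * u = 1 /\ u * a = al * a.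
Proof.
move=> fa.
have : (0 < ccnt g (rI (1 - g)%R))%N.
  apply/card_gt0P; exists (1 - g); rewrite !inE eqxx andbT.
  by rewrite mulrBl mul1r gg subrr.
rewrite -ccnt_eq => /card_gt0P [c]; rewrite !inE => /andP [/eqP cf /eqP cI].
have c1f : c * (1 - f) = c by rewrite mulrBr mulr1 cf subr0.
have alf : al * (1 - f) = 0 by rewrite mulrBr mulr1 af subrr.
have cb : c * be = 0 by rewrite -fb mulrA cf mul0r.
have [t ut] : exists t, (al + c) * t = 1.
  have : (1 - g) * 1 \in rI c by rewrite cI; apply/imsetP; exists 1.
  case/imsetP => t1 _ e.
  exists ((1 - f) * t1 + be * 1).
  rewrite mulrDl !mulrDr !mulrA alf cb mul0r add0r mul0r addr0 c1f -e.
  by rewrite -/g mulrBl !mul1r mulr1 addrC subrK.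
exists (al + c), t; split => //; split; first exact: rinv_linv.
by rewrite mulrDl -{2}fa mulrA cf mul0r addr0.
Qed.

End Pair.


Lemma pow_idem (e : T) : exists k, (0 < k)%N /\ e ^+ k * e ^+ k = e ^+ k.
Proof.
pose F (i : 'I_(#|T|.+1)) := e ^+ i.
have : [exists i, exists j, (i != j) && (F i == F j)].
  case E : [exists i, exists j, (i != j) && (F i == F j)] => //; move/negbT/existsPn: E => H.
  have inj : injective F.
    move=> i j eq; apply/eqP; apply/negPn/negP => neq.
    by move: (H i) => /existsPn /(_ j); rewrite neq eq eqxx.
  by have := leq_card F inj; rewrite card_ord ltnn.
case/existsP => i /existsP [j /andP [nij /eqP Fij]].
have [i0 [j0 [lt0 e0]]] : exists i0 j0, (i0 < j0)%N /\ e ^+ i0 = e ^+ j0.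
  case: (ltngtP i j) => [lt|gt|eq]; first by exists i, j.
    by exists j, i.
  by move: nij; rewrite -val_eqE /= eq eqxx.
set d := (j0 - i0)%N.
have step m : (i0 <= m)%N -> e ^+ (m + d) = e ^+ m.
  move=> le; have -> : (m + d = (m - i0) + j0)%N by rewrite /d; lia.
  by rewrite exprD -e0 -exprD subnK.
have stepT t m : (i0 <= m)%N -> e ^+ (m + t * d) = e ^+ m.
  move=> le; elim: t => [|t IH]; first by rewrite mul0n addn0.
  by rewrite mulSn addnCA addnC step ?IH // (leq_trans le (leq_addr _ _)).
exists (d * i0.+1)%N; split.
  by rewrite muln_gt0 subn_gt0 lt0.
rewrite -exprD mulnC stepT //.
by apply: (leq_trans (leqnSn i0)); rewrite leq_pmulr // subn_gt0.
Qed.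


Lemma assoc_unit (a b x y : T) : y * a = b -> x * b = a ->
  exists u v : T, u * v = 1 /\ v * u = 1 /\ u * a = b.
Proof.
move=> ya xb; set e := x * y.
have [k [kpos ek]] := pow_idem e.
case: k kpos ek => // k _ ek.
set f := e ^+ k.+1 in ek.
have ea : e * a = a by rewrite /e -mulrA ya xb.
have fa : f * a = a.
  rewrite /f; elim: k.+1 => [|n IH]; first by rewrite expr0 mul1r.
  by rewrite exprSr -mulrA ea.
have fe : f = e ^+ k * e by rewrite /f exprSr.
have ef : e ^+ k * f = f * e ^+ k by rewrite /f -!exprD addnC.
have ba : f * e ^+ k * x * (y * f) = f.
  by rewrite -!mulrA (mulrA x y) -/e (mulrA _ e) -fe mulrA ek.
have fb : f * (f * e ^+ k * x) = f * e ^+ k * x by rewrite !mulrA ek.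
have af : y * f * f = y * f by rewrite -mulrA ek.
have [u [v [uv [vu ua]]]] := @unit_pair f _ _ ek ba fb af a fa.
by exists u, v; rewrite ua -mulrA fa ya.
Qed.

End Alg.


Section Markov.
Variables (T : finPzRingType) (F : realFieldType) (alpha : F) (Q pi : T -> F).
Hypotheses (a0 : 0 < alpha) (alt1 : alpha < 1) (Q0 : forall x, 0 <= Q x) (Q1 : \sum_x Q x = 1)
  (Qc : class_constant Q) (pi1 : \sum_x pi x = 1)
  (st : forall b : T, \sum_(a : T) pi a * Mmat alpha Q a b = pi b).

Lemma statform d : pi d = alpha / (#|T|%:R) + (1 - alpha) * \sum_c pi c * Bmat Q c d.
Proof.
rewrite -st /Mmat; under eq_bigr do rewrite mulrDr.
by rewrite big_split /= -mulr_suml pi1 mul1r; congr (_ + _); rewrite mulr_sumr;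
  apply: eq_bigr => c _; rewrite mulrCA.
Qed.

Lemma Bsum c : \sum_d Bmat Q c d = 1.
Proof.
rewrite /Bmat; under eq_bigr do rewrite big_mkcond /=.
rewrite exchange_big /= -Q1; apply: eq_bigr => x _.
rewrite -big_mkcond /=; under eq_bigl do rewrite eq_sym.
by rewrite big_pred1_eq.
Qed.

Lemma B_ge0 c d : 0 <= Bmat Q c d.
Proof. by apply: sumr_ge0. Qed.

Variables (u v : T).
Hypotheses (uv : u * v = 1) (vu : v * u = 1).

Lemma Bconj c d : Bmat Q (u * c) (u * d) = Bmat Q c d.
Proof.
have inj : injective (fun x => u * x * v).
  move=> x y /= /(congr1 (fun z => v * z * u)).
  by rewrite !mulrA vu !mul1r -!mulrA vu !mulr1.
rewrite /Bmat (reindex_inj inj) /=; apply: eq_big => x.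
  rewrite -mulrA (mulrA v) vu mul1r -mulrA.
  apply/eqP/eqP => [|->] //.
  by move/(congr1 (fun z => v * z)); rewrite !mulrA vu !mul1r.
move=> _; symmetry; apply: Qc; by exists u, v.
Qed.

Lemma pi_conj d : pi (u * d) = pi d.
Proof.
have injm : injective (fun c : T => u * c).
  by move=> x y /= /(congr1 (fun z => v * z)); rewrite !mulrA vu !mul1r.
pose w c := pi (u * c) - pi c.
have wE d' : w d' = (1 - alpha) * \sum_c w c * Bmat Q c d'.
  have e : \sum_c pi c * Bmat Q c (u * d') = \sum_c pi (u * c) * Bmat Q c d'.
    by rewrite (reindex_inj injm) /=; apply: eq_bigr => c _; rewrite Bconj.
  rewrite /w (statform (u * d')) (statform d') e.
  under [X in _ = _ * X]eq_bigr do rewrite mulrBl.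
  by rewrite sumrB mulrBr opprD addrACA subrr add0r.
have S0 : \sum_d `|w d| <= (1 - alpha) * \sum_d `|w d|.
  have a1 : 0 <= 1 - alpha.
    by rewrite subr_ge0 ltW.
  apply: (@le_trans _ _ (\sum_d ((1 - alpha) * \sum_c `|w c| * Bmat Q c d))).
    apply: ler_sum => d' _; rewrite wE normrM ger0_norm //.
    apply: ler_wpM2l => //; apply: (le_trans (ler_norm_sum _ _ _)).
    by apply: ler_sum => c _; rewrite normrM (ger0_norm (B_ge0 _ _)).
  rewrite -mulr_sumr exchange_big /=; apply: ler_wpM2l => //.
  rewrite le_eqVlt; apply/orP; left; apply/eqP; apply: eq_bigr => c _; by rewrite -mulr_sumr Bsum mulr1.
have Sge : 0 <= \sum_d `|w d| by apply: sumr_ge0.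
have S00 : \sum_d `|w d| = 0.
  apply/eqP; rewrite eq_le Sge andbT.
  move: S0; rewrite mulrBl mul1r -subr_ge0 addrAC subrr add0r oppr_ge0.
  by rewrite pmulr_rle0.
have := @psumr_eq0P _ _ predT (fun c => `|w c|) (fun c _ => normr_ge0 _) S00 d isT.
by move/eqP; rewrite normr_eq0 subr_eq0 => /eqP.
Qed.
End Markov.

Theorem proposition3p1 (T : finPzRingType) (F : realFieldType) (alpha : F)
  (Q pi : T -> F) :
  0 < alpha -> alpha < 1 ->
  is_distribution Q -> class_constant Q ->
  stationary alpha Q pi ->
  forall a b : T, Sgen a = Sgen b -> pi a = pi b.
Proof.
move=> a0 a1 [Q0 Q1] Qc [[_ pi1] st] a b Sab.
have aS : a \in Sgen a by rewrite inE eqxx andbT; apply/imsetP; exists 1; rewrite ?mul1r.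
move: aS; rewrite Sab inE => /andP [_ /eqP Iab].
have : b \in Ideal a by rewrite Iab; apply/imsetP; exists 1; rewrite ?mul1r.
case/imsetP => y _ yb.
have : a \in Ideal b by rewrite -Iab; apply/imsetP; exists 1; rewrite ?mul1r.
case/imsetP => x _ xa.
have [u [v [uv [vu ua]]]] := @assoc_unit T _ _ _ _ (esym yb) (esym xa).
by rewrite -ua (@pi_conj T F alpha Q pi a0 a1 Q0 Q1 Qc pi1 st u v uv vu).
Qed.
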